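(* Let $q$ be a prime power, $t\ge1$, $F=\mathbb{F}_{q^t}$, $A\subseteq F$ with $|A|=n\le q^t$, and let $k$ satisfy $r=n-k\ge q^s$ for some integer $s<t$. Let $\{u_1,\dots,u_t\}$ be an $\mathbb{F}_q$-basis of $F$, $W$ an arbitrary $\mathbb{F}_q$-subspace of $F$ of dimension $s$, $L_W(x)=\prod_{w\in W}(x-w)$, $\alpha^*\in A$, and $g_i(x)=L_W\big(u_i(x-\alpha^* )\big)/(x-\alpha^* )$ for $i=1,\dots,t$ (polynomials of degree $q^s-1\le r-1$). Then the check polynomials $g_1,\dots,g_t$ yield a linear repair scheme over $\mathbb{F}_q$ for the codeword symbol $f(\alpha^* )$ of the Reed-Solomon code $\mathrm{RS}(A,k)$ with repair bandwidth at most $(n-1)(t-s)\log_2 q$ bits. Moreover, when $n=|F|=q^t$ and $r=q^s$, this repair bandwidth is optimal among linear repair schemes over $\mathbb{F}_q$.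
   Context: $\mathrm{RS}(A,k)=\{(f(\alpha))_{\alpha\in A} : f\in F[x],\ \deg f<k\}$, with $f(\alpha)$ stored at node $\alpha$. Every polynomial $g\in F[x]$ of degree at most $r-1$ gives a dual codeword (a check): $\sum_{\alpha\in A}\lambda_\alpha g(\alpha)f(\alpha)=0$ for fixed nonzero multipliers $\lambda_\alpha$. Given checks $g_1,\dots,g_t$ of degree at most $r-1$ with $\mathrm{rank}_{\mathbb{F}_q}\{g_i(\alpha^* )\}_i=t$, one obtains a linear repair scheme over $\mathbb{F}_q$: applying $\mathrm{Tr}_{F/\mathbb{F}_q}$ to the check equations, the replacement node recovers $t$ independent traces of $f(\alpha^* )$ by downloading from each node $\alpha\ne\alpha^*$ exactly $b_\alpha=\mathrm{rank}_{\mathbb{F}_q}\{g_1(\alpha),\dots,g_t(\alpha)\}$ sub-symbols of $\mathbb{F}_q$; the repair bandwidth is $\sum_{\alpha\neq\alpha^*}b_\alpha$ sub-symbols, i.e. $\log_2 q$ times that many bits. In general a linear repair scheme over $\mathbb{F}_q$ is one where each node sends $\mathbb{F}_q$-linear functions of its symbol and $f(\alpha^* )$ is recovered $\mathbb{F}_q$-linearly; its bandwidth is the total amount downloaded. *)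

(* Defs.v *)
From HB Require Import structures.
From mathcomp Require Import all_boot all_order all_algebra all_field.
Set Implicit Arguments. Unset Strict Implicit. Unset Printing Implicit Defensive.
Import GRing.Theory.
Local Open Scope ring_scope.

(* Setting: K = F_q (a finite field), L = F_{q^t} a finite field extension of K.
   L is viewed as a K-vector space; "F_q-subspace" = {vspace L},
   "rank over F_q" = \dim of the K-span. *)

Section Repair.
Variables (K : finFieldType) (L : fieldExtType K).

(* Subspace polynomial L_W(x) = prod_{w in W} (x - w).  The finite type
   finvect_type L (= L) is only used to enumerate the elements of L. *)
Definition subspace_poly (W : {vspace L}) : {poly L} :=
  \prod_(w : finvect_type L | (w : L) \in W) ('X - ((w : L))%:P).

Definition check_poly (W : {vspace L}) (u a : L) : {poly L} :=
  (subspace_poly W \Po (u%:P * ('X - a%:P))) %/ ('X - a%:P).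

(* A linear repair scheme over K for the symbol at node a of RS(A,k):
   S b is the list of downloads from node b: each download is a K-linear
   functional mu : L -> K applied to the symbol f(b), together with the
   coefficient c in L with which it enters the K-linear recovery map
   (a K-linear map K^N -> L is exactly x |-> sum_j x_j c_j). *)
Definition is_linear_repair_scheme (A : seq L) (k : nat) (a : L)
    (S : L -> seq ('Hom(L, K^o) * L)) : Prop :=
  forall f : {poly L}, (size f <= k)%N ->
    f.[a] = \sum_(b <- A | b != a) \sum_(p <- S b) ((p.1 f.[b] : K) *: p.2).

(* Repair bandwidth, in sub-symbols of K (= log2 q bits each). *)
Definition repair_bandwidth (A : seq L) (a : L)
    (S : L -> seq ('Hom(L, K^o) * L)) : nat :=
  (\sum_(b <- A | b != a) size (S b))%N.

End Repair.

(* Main.v *)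
Require Import Defs.
From HB Require Import structures.
From mathcomp Require Import all_boot all_order all_algebra all_field.
From mathcomp Require Import zify.
Import GRing.Theory.
Local Open Scope ring_scope.
Set Implicit Arguments. Unset Strict Implicit.

Section LW.
Variables (K : finFieldType) (L : fieldExtType K) (W : {vspace L}).
Local Notation L' := (finvect_type L).
Local Notation LW := (subspace_poly W).

Lemma cardW : #|[pred w : L' | (w : L) \in W]| = (#|K| ^ \dim W)%N.
Proof. rewrite -(card_vspace (W : {vspace L'})). by apply: eq_card. Qed.

Definition Wseq : seq L := enum [pred w : L' | (w : L) \in W].

Lemma Wseq_uniq : uniq Wseq.
Proof. exact: enum_uniq. Qed.

Lemma mem_Wseq x : (x \in Wseq) = (x \in W).
Proof. exact: (@mem_enum L' [pred w : L' | (w : L) \in W] x). Qed.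

Lemma size_Wseq : size Wseq = (#|K| ^ \dim W)%N.
Proof. by rewrite -cardW cardE. Qed.

Lemma LW_seq : LW = \prod_(w <- Wseq) ('X - w%:P).
Proof. rewrite /subspace_poly /Wseq; symmetry; exact: (@big_enum _ _ _ L' [pred w : L' | (w : L) \in W] (fun w : L' => 'X - (w : L)%:P)). Qed.

Lemma size_LW : size LW = (#|K| ^ \dim W).+1.
Proof. by rewrite LW_seq size_prod_XsubC size_Wseq. Qed.

Lemma monic_LW : LW \is monic.
Proof. by rewrite LW_seq monic_prod_XsubC. Qed.

Lemma hornerLW x : LW.[x] = \prod_(w <- Wseq) (x - w).
Proof. by rewrite LW_seq horner_prod; apply: eq_bigr => w _; rewrite hornerXsubC. Qed.

Lemma LW_root x : x \in W -> LW.[x] = 0.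
Proof.
move=> xW; rewrite hornerLW (bigD1_seq x) ?mem_Wseq ?Wseq_uniq //=.
by rewrite subrr mul0r.
Qed.

Lemma LW_shift x w : w \in W -> LW.[x + w] = LW.[x].
Proof.
move=> wW; rewrite /subspace_poly !horner_prod.
rewrite (reindex_inj (addIr (w : L'))) /=.
apply: eq_big => [y|y _]; first by rewrite /= rpredDr.
by rewrite !hornerXsubC opprD addrACA subrr addr0.
Qed.


Lemma q_gt0 : (0 < #|K|)%N.
Proof. by apply/card_gt0P; exists 0. Qed.

Lemma N_gt0 : (0 < #|K| ^ \dim W)%N.
Proof. by rewrite expn_gt0 q_gt0. Qed.

Lemma LW_add x y : LW.[x + y] = LW.[x] + LW.[y].
Proof.
pose N := (#|K| ^ \dim W)%N.
pose P := \prod_(w <- Wseq) ('X - (w - y)%:P).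
have hP z : P.[z] = LW.[z + y].
  rewrite hornerLW horner_prod; apply: eq_bigr => w _.
  by rewrite hornerXsubC opprB addrA addrAC.
have sP : size P = N.+1 by rewrite size_prod_XsubC size_Wseq.
have mP : P \is monic by rewrite monic_prod_XsubC.
pose Q := P - LW - (LW.[y])%:P.
suff Q0 : Q = 0.
  have := congr1 (fun p => p.[x]) Q0.
  rewrite /Q !hornerE hP => /eqP; rewrite subr_eq0 subr_eq => /eqP ->.
  by rewrite addrC.
apply/eqP; apply: contraT => Qn0.
have := max_poly_roots Qn0 (rs := Wseq).
rewrite Wseq_uniq size_Wseq.
have -> : all (root Q) Wseq.
  apply/allP => w; rewrite mem_Wseq => wW.
  by rewrite /root /Q !hornerE hP (addrC w y) LW_shift // (@LW_root w wW) subr0 subrr.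
move=> /(_ isT isT); apply: contraTT => _; rewrite -leqNgt.
rewrite /Q; apply: leq_trans (size_polyD _ _) _; rewrite geq_max; apply/andP; split.
  apply/leq_sizeP => j Nj; rewrite coefB.
  move: Nj; rewrite leq_eqVlt => /orP[/eqP <-|Nj].
    have := mP; have := monic_LW; rewrite !monicE /lead_coef size_LW sP /=.
    by move=> /eqP -> /eqP ->; rewrite subrr.
  by rewrite !nth_default ?subrr // ?size_LW ?sP.
by rewrite size_polyN size_polyC; case: (_ != 0) => //; exact: N_gt0.
Qed.

Lemma expK (c : K) d : c ^+ (#|K| ^ d) = c.
Proof.
elim: d => [|d IH]; first by rewrite expn0 expr1.
by rewrite expnS exprM expf_card IH.
Qed.

Lemma LW_scale (c : K) x : LW.[c *: x] = c *: LW.[x].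
Proof.
have [->|cn0] := eqVneq c 0.
  by rewrite !scale0r LW_root ?mem0v.
rewrite /subspace_poly !horner_prod.
rewrite (@reindex_inj _ _ _ L' (fun w : L' => (c *: (w:L)) : L') _ _ (scalerI cn0)) /=.
rewrite (eq_bigl (fun w : L' => (w : L) \in W)); last first.
  move=> w /=; apply/idP/idP => [h|h]; last exact: memvZ.
  by rewrite -(scalerK cn0 (w : L)); apply: memvZ.
rewrite (eq_bigr (fun w : L' => c%:A * ('X - (w:L)%:P).[x])); last first.
  by move=> w _; rewrite !hornerXsubC -scalerBr mulr_algl.
by rewrite big_split /= prodr_const cardW exprZn expr1n expK mulr_algl.

Qed.

End LW.

Definition LWfun (K : finFieldType) (L : fieldExtType K) (W : {vspace L}) (x : L) : L :=
  (subspace_poly W).[x].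

Lemma LWfun_lin (K : finFieldType) (L : fieldExtType K) (W : {vspace L}) :
  linear (LWfun W).
Proof. by move=> c x y; rewrite /LWfun LW_add LW_scale. Qed.

HB.instance Definition _ (K : finFieldType) (L : fieldExtType K) (W : {vspace L}) :=
  GRing.isSemilinear.Build K L L _ (LWfun W) (GRing.semilinear_linear (LWfun_lin W)).

Section G.
Variables (K : finFieldType) (L : fieldExtType K) (W : {vspace L}).
Local Notation L' := (finvect_type L).
Local Notation LW := (subspace_poly W).

Definition LWf : 'End(L) := linfun (LWfun W).

Lemma LWfE x : LWf x = LW.[x].
Proof. by rewrite lfunE. Qed.

Lemma W_ker : (W <= lker LWf)%VS.
Proof. by apply/subvP => x xW; rewrite memv_ker LWfE LW_root. Qed.

Definition Mp : {poly L} := \prod_(w <- Wseq W | w != 0) ('X - w%:P).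

Lemma LW_XM : LW = 'X * Mp.
Proof.
rewrite LW_seq (bigD1_seq 0) ?mem_Wseq ?mem0v ?Wseq_uniq //=.
by rewrite polyC0 subr0.
Qed.

Lemma LW_hornerM y : LW.[y] = y * Mp.[y].
Proof. by rewrite LW_XM hornerM hornerX. Qed.

Lemma check_polyE u a :
  check_poly W u a = u%:P * (Mp \Po (u%:P * ('X - a%:P))).
Proof.
rewrite /check_poly LW_XM comp_polyM comp_polyX.
rewrite [u%:P * ('X - _)]mulrC -mulrA mulKp //.
by rewrite -size_poly_eq0 size_XsubC.
Qed.

Lemma check_horner u a x :
  (check_poly W u a).[x] = u * Mp.[u * (x - a)].
Proof.
by rewrite check_polyE hornerM hornerC horner_comp hornerM hornerC hornerXsubC.
Qed.

Lemma size_Mp : size Mp = (#|K| ^ \dim W)%N.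
Proof.
rewrite /Mp -big_filter size_prod_XsubC -rem_filter ?Wseq_uniq //.
by rewrite size_rem ?mem_Wseq ?mem0v // size_Wseq prednK // N_gt0.
Qed.

Lemma size_check u a : u != 0 -> size (check_poly W u a) = (#|K| ^ \dim W)%N.
Proof.
move=> un0; rewrite check_polyE size_Cmul // size_comp_poly2 ?size_Mp //.
by rewrite size_Cmul // size_XsubC.
Qed.

Lemma Mp0 : Mp.[0] != 0.
Proof.
rewrite /Mp horner_prod prodf_seq_neq0; apply/allP => w _.
by apply/implyP => wn0; rewrite hornerXsubC sub0r oppr_eq0.
Qed.

End G.

Section Dual.
Variable (F : fieldType).

Definition lam (A : seq F) (x : F) : F := (\prod_(y <- A | y != x) (x - y))^-1.
Definition ell (A : seq F) (x : F) : {poly F} := \prod_(y <- A | y != x) ('X - y%:P).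

Lemma size_ell A x : uniq A -> x \in A -> size (ell A x) = size A.
Proof.
move=> uA xA; rewrite /ell -big_filter size_prod_XsubC -rem_filter //.
by rewrite size_rem // prednK //; case: A xA {uA}.
Qed.

Lemma monic_ell A x : ell A x \is monic.
Proof. by rewrite /ell -big_filter monic_prod_XsubC. Qed.

Lemma ell_horner_self A x : (ell A x).[x] = \prod_(y <- A | y != x) (x - y).
Proof. by rewrite /ell horner_prod; apply: eq_bigr => y _; rewrite hornerXsubC. Qed.

Lemma ell_horner_other A x b : b \in A -> b != x -> uniq A -> (ell A x).[b] = 0.
Proof.
move=> bA bx uA; rewrite /ell horner_prod -big_filter.
rewrite (bigD1_seq b) ?mem_filter ?bx ?bA ?filter_uniq //=.
by rewrite hornerXsubC subrr mul0r.
Qed.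

Lemma lam_neq0 A x : uniq A -> lam A x != 0.
Proof.
move=> uA; rewrite /lam invr_eq0 prodf_seq_neq0; apply/allP => y _.
by apply/implyP => yx; rewrite subr_eq0 eq_sym.
Qed.

Lemma dual_rs (A : seq F) (h : {poly F}) :
  uniq A -> (size h < size A)%N -> \sum_(x <- A) lam A x * h.[x] = 0.
Proof.
move=> uA sh.
pose Q := \sum_(x <- A) (lam A x * h.[x]) *: ell A x.
have hQ : Q = h.
  apply/eqP; rewrite -subr_eq0; apply/eqP; apply: contraTeq isT => Qn0.
  have := max_poly_roots Qn0 (rs := A).
  have -> : all (root (Q - h)) A.
    apply/allP => b bA; rewrite /root /Q hornerD hornerN horner_sum.
    rewrite (bigD1_seq b) //= big1_seq ?addr0.
      rewrite hornerZ ell_horner_self /lam mulrAC mulVf ?mul1r ?subrr //.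
      by have := lam_neq0 b uA; rewrite /lam invr_eq0.
    move=> x /andP[xb xA]; rewrite hornerZ ell_horner_other ?mulr0 //.
    by rewrite eq_sym.
  move=> /(_ isT uA); apply: contraTT => _; rewrite -leqNgt.
  apply/leq_sizeP => j Aj; rewrite coefB coef_sum big1_seq ?sub0r.
    by rewrite nth_default ?oppr0 // (leq_trans (ltnW sh)).
  by move=> x /andP[_ xA]; rewrite coefZ nth_default ?mulr0 // size_ell.
have nA : (0 < size A)%N by case: (size A) sh.
have := congr1 (fun p : {poly F} => p`_(size A).-1) hQ.
rewrite /Q coef_sum nth_default; last by rewrite -ltnS prednK.
move=> H; apply: etrans H; rewrite big_seq [RHS]big_seq; apply: eq_bigr => x xA.
rewrite coefZ -(size_ell uA xA).
by have := monic_ell A x; rewrite monicE /lead_coef => /eqP ->; rewrite mulr1.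
Qed.
End Dual.

Lemma bernoulli q d : (1 <= q)%N -> (1 + d * (q - 1) <= q ^ d)%N.
Proof.
move=> q1; elim: d => [|d IH]; first by rewrite expn0.
rewrite expnS; nia.
Qed.

Lemma tangent q s y : (2 <= q)%N ->
  (q ^ s + y * (q ^ s * (q - 1)) <= q ^ y + s * (q ^ s * (q - 1)))%N.
Proof.
move=> q2; have [sy|ys] := leqP s y.
  have -> : y = (s + (y - s))%N by rewrite subnKC.
  rewrite expnD; have := bernoulli (y - s) (ltnW q2); nia.
have : (1 <= s - y)%N by rewrite subn_gt0.
have : (q ^ s <= q ^ s * (q - 1))%N by rewrite leq_pmulr // subn_gt0.
nia.
Qed.

Lemma sum_tangent (I : Type) (r : seq I) (P : pred I) (y : I -> nat) q s :
  (2 <= q)%N ->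
  (\sum_(i <- r | P i) q ^ y i <= count P r * q ^ s)%N ->
  (\sum_(i <- r | P i) y i <= count P r * s)%N.
Proof.
move=> q2 H.
set D := (q ^ s * (q - 1))%N.
have Dp : (0 < D)%N by rewrite muln_gt0 expn_gt0 subn_gt0 (ltnW q2) q2.
have T : (\sum_(i <- r | P i) (q ^ s + y i * D) <= \sum_(i <- r | P i) (q ^ y i + s * D))%N.
  by apply: leq_sum => i _; exact: tangent.
rewrite !big_split /= -!big_distrl /= !big_const_seq !iter_addn_0 in T.
rewrite -(leq_pmul2r Dp). nia.
Qed.

Definition PhiF (K : fieldType) (L : fieldExtType K) (tau : 'Hom(L, K^o)) (la : L)
  (t : nat) (c : 'I_t -> L) (y : L) : L := \sum_(i < t) tau (la * (c i * y)) *: c i.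

Lemma PhiF_lin (K : fieldType) (L : fieldExtType K) (tau : 'Hom(L, K^o)) la t c :
  linear (@PhiF K L tau la t c).
Proof.
move=> k y z; rewrite /PhiF scaler_sumr -big_split; apply: eq_bigr => i _ /=.
rewrite mulrDr -(scalerAr k (c i) y) mulrDr -(scalerAr k la) linearD linearZ /= scalerDl scalerA.
done.

Qed.

HB.instance Definition _ (K : fieldType) (L : fieldExtType K) (tau : 'Hom(L, K^o)) la t c :=
  GRing.isSemilinear.Build K L L _ (@PhiF K L tau la t c)
    (GRing.semilinear_linear (@PhiF_lin K L tau la t c)).

Section Scheme.
Variables (K : finFieldType) (L : fieldExtType K).
Local Notation L' := (finvect_type L).

Lemma tau_ex : exists tau : 'Hom(L, K^o), exists x0, tau x0 != 0.
Proof.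
have dp : (0 < \dim (fullv : {vspace L}))%N.
  by rewrite lt0n dimv_eq0 -subv0; apply/negP => /subvP /(_ 1 (memvf 1)); rewrite memv0 oner_eq0.
pose i0 := Ordinal dp.
exists (linfun (coord (vbasis (fullv : {vspace L})) i0 : L -> K^o)).
exists ((vbasis fullv)`_i0).
have H := coord_free i0 i0 (basis_free (vbasisP (fullv : {vspace L}))).
rewrite eqxx /= in H. by rewrite lfunE /= H oner_eq0.
Qed.

Lemma scheme_from_checks (A : seq L) (k : nat) (a : L) (t : nat) (G : t.-tuple {poly L}) :
  uniq A -> a \in A ->
  (forall (g f : {poly L}), g \in G -> (size f <= k)%N -> (size (g * f)%R < size A)%N) ->
  free [seq g.[a] | g <- G] ->
  <<[seq g.[a] | g <- G]>>%VS = fullv ->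
  exists S : L -> seq ('Hom(L, K^o) * L),
    is_linear_repair_scheme A k a S /\
    forall b, size (S b) = \dim <<[seq g.[b] | g <- G]>>.
Proof.
move=> uA aA chk frC spC.
have [tau [x0 tx0]] := tau_ex.
pose C := map_tuple (fun g : {poly L} => g.[a]) G.
have CE : forall i : 'I_t, C`_i = (G`_i).[a].
  by move=> i; rewrite (nth_map 0) // size_tuple.
pose la := lam A a.
pose Phi : 'End(L) := linfun (@PhiF K L tau la t (fun i => C`_i)).
have PhiE y : Phi y = \sum_(i < t) tau (la * (C`_i * y)) *: C`_i.
  by rewrite lfunE.
have Phi0 : lker Phi == 0%VS.
  apply/eqP/vspaceP => y; rewrite memv_ker memv0.
  apply/eqP/eqP => [Py0|->]; last exact: linear0.
  have frC' : free C := frC.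
  have kz : forall i : 'I_t, tau (la * (C`_i * y)) = 0.
    by apply: (freeP frC'); rewrite -PhiE.
  have kz' : forall x, tau (la * (x * y)) = 0.
    move=> x; have xC : x \in <<C>>%VS by rewrite spC memvf.
    rewrite (coord_span xC) mulr_suml mulr_sumr linear_sum big1 // => i _.
    by rewrite -scalerAl -scalerAr linearZ /= kz; rewrite scaler0.
  apply/eqP; apply: contraTT tx0 => yn0; apply/negPn/eqP.
  have la0 : la != 0 by exact: lam_neq0.
  have := kz' (la^-1 * x0 / y).
  by rewrite mulrA mulrA divfK // mulVKf.
pose es (i : 'I_t) := (Phi^-1)%VF C`_i.
have recon y : y = \sum_(i < t) tau (la * (C`_i * y)) *: es i.
  rewrite -{1}(lker0_lfunK Phi0 y) PhiE linear_sum; apply: eq_bigr => i _.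
  by rewrite linearZ.
pose U b := <<[seq g.[b] | g <- G]>>%VS.
pose vb b := vbasis (U b).
pose S b := [seq ((tau \o amull (lam A b * (vb b)`_j))%VF,
                  - \sum_(i < t) coord (vb b) j ((G`_i).[b]) *: es i)
            | j : 'I_(\dim (U b)) <- enum 'I_(\dim (U b))].
exists S; split; last first.
  by move=> b; rewrite size_map -cardE card_ord.
move=> f sf.
have Gi (i : 'I_t) : G`_i \in G by apply: mem_nth; rewrite size_tuple.
have key (i : 'I_t) : \sum_(b <- A | b != a) tau (lam A b * ((G`_i).[b] * f.[b]))
             = - tau (la * (C`_i * f.[a])).
  have := dual_rs uA (chk _ _ (Gi i) sf).
  rewrite (bigD1_seq a) //= => /eqP; rewrite addrC addr_eq0 => /eqP H.
  have := congr1 tau H; rewrite linear_sum linearN /= CE hornerM => <-.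
  by apply: eq_bigr => b _; rewrite hornerM.
have GU (i : 'I_t) b : (G`_i).[b] \in U b.
  by apply: memv_span; apply: map_f; exact: Gi.
have inner b : \sum_(p <- S b) (p.1 f.[b] : K) *: p.2
     = - \sum_(i < t) tau (lam A b * ((G`_i).[b] * f.[b])) *: es i.
  rewrite big_map big_enum /=.
  under eq_bigr do rewrite comp_lfunE lfunE /= scalerN scaler_sumr.
  rewrite sumrN exchange_big /=; congr (- _); apply: eq_bigr => i _.
  rewrite [X in tau (_ * (X * _))](coord_vbasis (GU i b)).
  rewrite mulr_suml mulr_sumr linear_sum scaler_suml; apply: eq_bigr => j _.
  rewrite scalerA -scalerAl -scalerAr mulrA linearZ /=; congr (_ *: _); exact: mulrC.
under eq_bigr do rewrite inner.
rewrite sumrN exchange_big /=.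
rewrite {1}(recon f.[a]) -sumrN; apply: eq_bigr => i _.
by rewrite -scaler_suml key scaleNr opprK.
Qed.
End Scheme.

Lemma sum_count (T : Type) (A : seq T) (P Q : pred T) :
  (\sum_(b <- A | P b) (Q b : nat))%N = count (fun b => P b && Q b) A.
Proof.
elim: A => [|x A IH]; first by rewrite big_nil.
by rewrite big_cons /= IH; case: (P x); case: (Q x).
Qed.

Lemma count_split (T : Type) (A : seq T) (P Q : pred T) :
  (count (fun b => P b && Q b) A + count (fun b => P b && ~~ Q b) A)%N = count P A.
Proof.
elim: A => [|x A IH] //=.
by rewrite -IH; case: (P x); case: (Q x) => /=; rewrite ?add0n ?addn0; lia.
Qed.

Section Opt.
Variables (K : finFieldType) (L : fieldExtType K).
Local Notation L' := (finvect_type L).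

Definition Vsp (tau : 'Hom(L, K^o)) (s : seq ('Hom(L, K^o) * L)) : {vspace L} :=
  foldr (fun p U => (U :&: lker (tau \o amulr p.2))%VS) fullv s.

Lemma memVsp tau s z : (z \in Vsp tau s) = all (fun p => tau (z * p.2) == 0) s.
Proof.
elim: s => [|p s IH] /=; first by rewrite memvf.
by rewrite memv_cap IH memv_ker comp_lfunE lfunE /= andbC.
Qed.

Lemma dimVsp tau s : (\dim {:L} - size s <= \dim (Vsp tau s))%N.
Proof.
elim: s => [|p s IH] /=; first by rewrite subn0.
set U := Vsp tau s; set f := (tau \o amulr p.2)%VF.
have hk : (\dim {:L} - 1 <= \dim (lker f))%N.
  have : (\dim (lker f) + \dim (f @: fullv) = \dim {:L})%N.
    by rewrite -(limg_ker_dim f fullv) capfv.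
  have : (\dim (f @: fullv) <= 1)%N.
    by apply: leq_trans (dimvS (subvf _)) _; rewrite dimvf.
  lia.
have : (\dim (U + lker f) + \dim (U :&: lker f) = \dim U + \dim (lker f))%N.
  exact: dimv_sum_cap.
have : (\dim (U + lker f) <= \dim {:L})%N by apply: dimvS; exact: subvf.
move=> h1 h2; move: IH hk h1 h2; set t := \dim {:L}; set dU := \dim U.
set dk := \dim (lker f); set dS := \dim (U + lker f); set dI := \dim (U :&: lker f).
lia.
Qed.

Lemma per_z (A : seq L) (k : nat) (a : L) (S : L -> seq ('Hom(L, K^o) * L)) (tau : 'Hom(L, K^o)) (x0 z : L) :
  uniq A -> a \in A -> is_linear_repair_scheme A k a S -> tau x0 != 0 -> z != 0 ->
  (count (fun b => (b != a) && (z \in Vsp tau (S b))) A < size A - k)%N.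
Proof.
move=> uA aA sch tx0 zn0; rewrite ltnNge; apply/negP => H.
pose T := [seq b <- A | (b != a) && (z \notin Vsp tau (S b))].
have sT : size T = count (fun b => (b != a) && ~~ (z \in Vsp tau (S b))) A.
  by rewrite size_filter.
have cS := count_split A (predC1 a) (fun b => z \in Vsp tau (S b)).
have cA : count (predC1 a) A = (size A - 1)%N.
  have := count_predC (pred1 a) A; rewrite -/(count_mem a A) count_uniq_mem // aA.
  move=> <-; rewrite addKn //.
pose l := \prod_(y <- T) ('X - y%:P).
have sl : (size l <= k)%N.
  rewrite size_prod_XsubC sT.
  have : (0 < size A)%N by case: (A) aA.
  move: cS; rewrite cA /= -sT => cS h0; move: H cS h0; set c1 := count _ A; lia.
have la0 : l.[a] != 0.
  rewrite horner_prod prodf_seq_neq0; apply/allP => y.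
  by rewrite mem_filter => /andP[/andP[ya _] _]; rewrite hornerXsubC subr_eq0 eq_sym.
have tz : forall c, tau (z * c) = 0.
  move=> c; pose f := (c / l.[a]) *: l.
  have sf : (size f <= k)%N by apply: leq_trans (size_scale_leq _ _) sl.
  have fa : f.[a] = c by rewrite hornerZ divfK.
  have := sch f sf; rewrite fa => ->.
  rewrite mulr_sumr linear_sum big_seq_cond big1 // => b /andP[bA ba].
  rewrite mulr_sumr linear_sum big_seq big1 // => p pS.
  rewrite -scalerAr linearZ /=.
  case: (boolP (z \in Vsp tau (S b))) => zV.
    by move: zV; rewrite memVsp => /allP /(_ p pS) /eqP ->; rewrite scaler0.
  have bT : b \in T by rewrite mem_filter ba zV bA.
  have -> : f.[b] = 0.
    by rewrite hornerZ; have := root_prod_XsubC T b; rewrite bT => /rootP ->; rewrite mulr0.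
  by rewrite linear0 scale0r.
have := tz (z^-1 * x0); rewrite mulVKf // => tx; by rewrite tx eqxx in tx0.
Qed.

End Opt.

Section Opt2.
Variables (K : finFieldType) (L : fieldExtType K).
Local Notation L' := (finvect_type L).

Lemma q_gt1 : (1 < #|K|)%N.
Proof. by rewrite (cardD1 0) (cardD1 1) !inE oner_eq0. Qed.

Lemma optimal (A : seq L) (k : nat) (a : L) (S : L -> seq ('Hom(L, K^o) * L)) (q t s : nat) :
  #|K| = q -> \dim {:L} = t -> uniq A -> a \in A -> size A = (q ^ t)%N ->
  (size A - k = q ^ s)%N ->
  is_linear_repair_scheme A k a S -> ((size A - 1) * (t - s) <= repair_bandwidth A a S)%N.
Proof.
move=> hq ht uA aA hn hr sch.
have [tau [x0 tx0]] := @tau_ex K L.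
pose V b := Vsp tau (S b).
have q2 : (2 <= q)%N by rewrite -hq q_gt1.
have cA : count (predC1 a) A = (size A - 1)%N.
  have := count_predC (pred1 a) A; rewrite -/(count_mem a A) count_uniq_mem // aA.
  move=> <-; rewrite addKn //.
set N := count (predC1 a) A.
have cardV b : #|[pred z : L' | (z : L) \in V b]| = (1 + \sum_(z : L' | z != 0%R) ((z : L) \in V b : nat))%N.
  rewrite (cardD1 (0 : L')) inE mem0v; congr (1 + _)%N.
  rewrite -big_mkcondr /= sum1_card; apply: eq_card => z; rewrite !inE.
  by rewrite andbC.
have cardV' b : #|[pred z : L' | (z : L) \in V b]| = (q ^ \dim (V b))%N.
  by rewrite -hq -(card_vspace (V b : {vspace L'})); apply: eq_card.
have cardL : #|L'| = (q ^ t)%N.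
  by rewrite -ht -hq -(card_vspace (fullv : {vspace L'})) card_vspacef.
have step1 : (\sum_(b <- A | b != a) q ^ \dim (V b) <= N * q ^ s)%N.
  have -> : (\sum_(b <- A | b != a) q ^ \dim (V b) =
        N + \sum_(b <- A | b != a) \sum_(z : L' | z != 0%R) ((z : L) \in V b : nat))%N.
    have NE : N = (\sum_(b <- A | b != a) 1)%N.
      rewrite /N; elim: (A) => [|x r IH]; first by rewrite big_nil.
      by rewrite big_cons /= IH; case: (x != a).
    by rewrite NE -big_split /=; apply: eq_bigr => b _; rewrite -cardV' cardV.
  rewrite exchange_big /=.
  apply: (@leq_trans (N + \sum_(z : L' | z != 0%R) (q ^ s - 1))%N).
    rewrite leq_add2l; apply: leq_sum => z zn0; rewrite sum_count.
    have := per_z uA aA sch tx0 zn0; rewrite hr.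
    by set c := count _ A; lia.
  rewrite (eq_bigl (fun z : L' => z \in predC1 (0 : L'))) // sum_nat_const cardC1 cardL.
  have hN : N = (q ^ t - 1)%N by rewrite /N cA hn.
  have qs1 : (1 <= q ^ s)%N by rewrite expn_gt0 (ltnW q2).
  rewrite hN; move: qs1; set Qs := (q ^ s)%N; set Qt := (q ^ t)%N; nia.
have step2 : (\sum_(b <- A | predC1 a b) q ^ (t - size (S b)) <= count (predC1 a) A * q ^ s)%N.
  apply: leq_trans step1; apply: leq_sum => b _.
  by rewrite leq_pexp2l ?(ltnW q2) // -ht dimVsp.
have step3 := sum_tangent q2 step2.
rewrite /repair_bandwidth -cA.
have e1 : (\sum_(b <- A | b != a) t = count (predC1 a) A * t)%N.
  by rewrite big_const_seq iter_addn_0 mulnC.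
have e2 : (\sum_(b <- A | b != a) t <= \sum_(b <- A | b != a) size (S b) + \sum_(b <- A | b != a) (t - size (S b)))%N.
  by rewrite -big_split /=; apply: leq_sum => b _; lia.
move: e1 e2 step3; rewrite -/N.
set BW := (\sum_(b <- A | b != a) size (S b))%N.
set Y := (\sum_(b <- A | _) (t - size (S b)))%N.
set T := (\sum_(b <- A | b != a) t)%N.
nia.
Qed.
End Opt2.

Section Dims.
Variables (K : finFieldType) (L : fieldExtType K) (W : {vspace L}).

Lemma dim_img_le (f : 'End(L)) (U : {vspace L}) : (\dim (f @: U) <= \dim U)%N.
Proof. by rewrite -(limg_ker_dim f U) leq_addl. Qed.

Lemma span_at_a (t : nat) (u : t.-tuple L) (a : L) :
  basis_of fullv u ->
  <<[seq (check_poly W ui a).[a] | ui <- u]>>%VS = fullv /\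
  free [seq (check_poly W ui a).[a] | ui <- u].
Proof.
move=> /andP[/eqP spU frU].
pose m0 := (Mp W).[0].
have m0u : m0 \is a GRing.unit by rewrite unitfE Mp0.
pose f := amulr m0.
have E : [seq (check_poly W ui a).[a] | ui <- u] = [seq f ui | ui <- u].
  by apply: eq_map => ui; rewrite check_horner subrr mulr0 lfunE.
have sp : <<[seq (check_poly W ui a).[a] | ui <- u]>>%VS = fullv.
  by rewrite E -limg_span spU; apply: lker0_limgf; exact: lker0_amulr.
split => //.
rewrite /free sp size_map.
have := frU; rewrite /free spU => /eqP ->.
done.
Qed.

Lemma dim_at_b (t : nat) (u : t.-tuple L) (a b : L) :
  basis_of fullv u -> b != a ->
  (\dim <<[seq (check_poly W ui a).[b] | ui <- u]>> <= \dim {:L} - \dim W)%N.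
Proof.
move=> /andP[/eqP spU frU] ba.
have dn0 : b - a != 0 by rewrite subr_eq0.
pose h := (amulr ((b - a)^-1)%R \o (LWf W \o amulr (b - a)))%VF.
have E : [seq (check_poly W ui a).[b] | ui <- u] = [seq h ui | ui <- u].
  apply: eq_map => ui; rewrite check_horner /h !comp_lfunE LWfE !lfunE /=.
  by rewrite LW_hornerM [ui * _ * _]mulrAC mulfK.
rewrite E -limg_span spU /h !limg_comp.
apply: leq_trans (dim_img_le _ _) _.
apply: leq_trans (dimvS (limgS _ (subvf _))) _.
have := limg_ker_dim (LWf W) fullv; rewrite capfv.
have := dimvS (W_ker W).
move=> h1 h2; move: h1 h2; set D := \dim (lker (LWf W)); set I := \dim (LWf W @: fullv).
set dW := \dim W; set T := \dim {:L}.
lia.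
Qed.
End Dims.

Unset Implicit Arguments.
Unset Strict Implicit.

Theorem theorem4 (K : finFieldType) (L : fieldExtType K) (q t s n k : nat)
    (A : seq L) (u : t.-tuple L) (W : {vspace L}) (a : L) :
  #|K| = q -> \dim {:L} = t -> (1 <= t)%N ->
  uniq A -> size A = n -> (n <= q ^ t)%N ->
  (s < t)%N -> (q ^ s <= n - k)%N ->
  basis_of fullv u -> \dim W = s -> a \in A ->
  let g := fun ui : L => check_poly W ui a in
  [/\ (* the g_i are checks: deg g_i = q^s - 1 <= r - 1 *)
      (forall ui, ui \in u -> size (g ui) = (q ^ s)%N /\ (size (g ui) <= n - k)%N),
      (* rank_{F_q} {g_i(a)} = t *)
      \dim <<[seq (g ui).[a] | ui <- u]>>%VS = t,
      (* the induced linear repair scheme: node b sends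
         b_b = rank_{F_q}{g_i(b)} sub-symbols, total <= (n-1)(t-s) *)
      exists S, [/\ is_linear_repair_scheme A k a S,
        (forall b, b \in A -> b != a ->
           size (S b) = \dim <<[seq (g ui).[b] | ui <- u]>>%VS),
        (\sum_(b <- A | b != a) \dim <<[seq (g ui).[b] | ui <- u]>>%VS
           <= (n - 1) * (t - s))%N &
        (repair_bandwidth A a S <= (n - 1) * (t - s))%N] &
      (* optimality when n = q^t and r = q^s *)
      n = (q ^ t)%N -> (n - k = q ^ s)%N ->
      forall S, is_linear_repair_scheme A k a S ->
        ((n - 1) * (t - s) <= repair_bandwidth A a S)%N].
Proof.
move=> hq ht t1 uA hn hnq st hr bas hW aA g.
have bas' := bas; move: bas' => /andP[/eqP spU frU].
have sg ui : ui \in u -> size (g ui) = (q ^ s)%N.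
  by move=> uiu; rewrite /g size_check ?hq ?hW // (free_not0 frU uiu).
have [spA frA] := span_at_a W a bas.
have cA : count (predC1 a) A = (n - 1)%N.
  have := count_predC (pred1 a) A; rewrite -/(count_mem a A) count_uniq_mem // aA.
  by rewrite hn => <-; rewrite addKn.
have dimb b : b \in A -> b != a ->
    (\dim <<[seq (g ui).[b] | ui <- u]>> <= t - s)%N.
  by move=> _ ba; apply: leq_trans (dim_at_b W bas ba) _; rewrite ht hW.
have sumb : (\sum_(b <- A | b != a) \dim <<[seq (g ui).[b] | ui <- u]>>%VS
           <= (n - 1) * (t - s))%N.
  apply: (@leq_trans (\sum_(b <- A | b != a) (t - s))%N).
    by rewrite big_seq_cond [X in (_ <= X)%N]big_seq_cond; apply: leq_sum => b /andP[bA ba]; exact: dimb.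
  by rewrite big_const_seq iter_addn_0 -/(predC1 a) cA mulnC.
split.
- by move=> ui uiu; rewrite sg.
- by rewrite spA ht.
- pose G := map_tuple g u.
  have mG b : [seq g0.[b] | g0 <- G] = [seq (g ui).[b] | ui <- u] by rewrite -map_comp.
  have chk : forall (g0 f : {poly L}), g0 \in G -> (size f <= k)%N -> (size (g0 * f)%R < size A)%N.
    move=> g0 f /mapP[ui uiu ->] sf; rewrite hn.
    apply: leq_ltn_trans (size_mul_leq _ _) _; rewrite sg //.
    have : (1 <= q ^ s)%N.
      by rewrite expn_gt0 -hq (ltnW (@q_gt1 K)).
    move: hr sf; set Qs := (q ^ s)%N; set sz := size f; lia.
  have frG : free [seq g0.[a] | g0 <- G] by rewrite mG.
  have spG : <<[seq g0.[a] | g0 <- G]>>%VS = fullv by rewrite mG.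
  have [S [sch szS]] := scheme_from_checks uA aA chk frG spG.
  exists S; split => //.
  + by move=> b _ _; rewrite szS mG.
  + rewrite /repair_bandwidth; apply: leq_trans sumb.
    by rewrite leq_eqVlt; apply/orP; left; apply/eqP; apply: eq_bigr => b _; rewrite szS mG.
- move=> hnt hrs S sch; rewrite -hn.
  apply: (optimal hq ht uA aA _ _ sch); by rewrite hn.
Qed.
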